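(* Let $T$ be a $k$-IET on $I=[\ell,r)$ over the ordered alphabet $\mathcal{A}=\{a_1<\dots<a_k\}$ with partition $(I_a)_{a\in\mathcal{A}}$ and permutation $\pi\in S_{\mathcal{A}}$. Suppose $|I_{a_k}|=|I_{\pi(a_k)}|$ and $a_k\neq\pi(a_k)$. Let $I'=[\ell,r-|I_{a_k}|)$, $\mathcal{A}'=\mathcal{A}\setminus\{a_k\}$ (with the induced order) and define $\pi'\in S_{\mathcal{A}'}$ by $\pi'(a)=\pi(a_k)$ if $a=\pi^{-1}(a_k)$ and $\pi'(a)=\pi(a)$ otherwise. Then the map induced by $T$ on $I'$ (the first-return map $x\mapsto T^{\nu(x)}(x)$, $\nu(x)=\min\{n>0: T^n(x)\in I'\}$), denoted $\rho(T)$, is the $(k-1)$-IET on $I'$ over $\mathcal{A}'$ with partition $(I_a)_{a\in\mathcal{A}'}$ and permutation $\pi'$. Moreover, for every $x\in I'$, $\Omega_T(x)=\varphi(\Omega_{\rho(T)}(x))$, where $\varphi:\mathcal{A}'^*\to\mathcal{A}^*$ (extended to infinite words) is the morphism with $\varphi(\pi(a_k))=\pi(a_k)a_k$ and $\varphi(c)=c$ for every letter $c\neq\pi(a_k)$.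
   Context: A $k$-IET $T$ on $I=[\ell,r)$ over $\mathcal{A}$ is given by a partition of $I$ into left-closed right-open intervals $(I_a)_{a\in\mathcal{A}}$ of positive length, with $I_a$ to the left of $I_b$ whenever $a<b$, and a permutation $\pi$ of $\mathcal{A}$; $T(x)=x+\tau_a$ for $x\in I_a$ where $\tau_a=\sum_{b:\,\pi^{-1}(b)<\pi^{-1}(a)}|I_b|-\sum_{b<a}|I_b|$ (so the image intervals $T(I_{\pi(a_1)}),\dots,T(I_{\pi(a_k)})$ appear from left to right). The trajectory of $x$ under an IET $S$ over an alphabet $\mathcal{C}$ with partition $(J_c)$ is $\Omega_S(x)=w_0w_1\cdots$ with $w_i=c$ iff $S^i(x)\in J_c$. *)

(* Defs.v *)
From HB Require Import structures.
From mathcomp Require Import all_boot all_order all_algebra.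
From mathcomp Require Import reals.
Set Implicit Arguments. Unset Strict Implicit. Unset Printing Implicit Defensive.
Import Order.TTheory GRing.Theory Num.Theory.
Local Open Scope ring_scope.

(* An interval exchange transformation on I = [left, right) over an ordered
   alphabet.  Letters live in an arbitrary eqType L; the alphabet
   A = {a_1 < ... < a_k} is the sequence [iet_alph] (its order is the listing
   order).  [iet_len a] = |I_a|, [iet_perm] = pi (only its values on the
   alphabet matter). *)
Record iet (R : realType) (L : eqType) := IET {
  iet_left : R;
  iet_alph : seq L;
  iet_len  : L -> R;
  iet_perm : L -> L }.

Section IET.
Variables (R : realType) (L : eqType).
Implicit Types (T : iet R L) (a b : L) (x : R).

Definition iet_right T := iet_left T + \sum_(a <- iet_alph T) iet_len T a.

Definition iet_before T b a := (index b (iet_alph T) < index a (iet_alph T))%N.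

Definition iet_start T a :=
  iet_left T + \sum_(b <- iet_alph T | iet_before T b a) iet_len T b.

Definition in_sub T a x :=
  (iet_start T a <= x) && (x < iet_start T a + iet_len T a).

(* pi^{-1}(b): the letter c of the alphabet with pi(c) = b *)
Definition iet_pinv T b :=
  nth b (iet_alph T) (index b (map (iet_perm T) (iet_alph T))).

Definition iet_tau T a :=
  \sum_(b <- iet_alph T | iet_before T (iet_pinv T b) (iet_pinv T a)) iet_len T b
  - \sum_(b <- iet_alph T | iet_before T b a) iet_len T b.

(* T(x) = x + tau_a for x in I_a (the I_a are disjoint, so at most one term
   of the sum is nonzero); T(x) = x outside I (irrelevant). *)
Definition iet_map T x := x + \sum_(a <- iet_alph T | in_sub T a x) iet_tau T a.

Definition is_iet T :=
  [/\ uniq (iet_alph T), iet_alph T != [::],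
      all (fun a => 0 < iet_len T a) (iet_alph T)
    & perm_eq (map (iet_perm T) (iet_alph T)) (iet_alph T)].

(* the letter c with x in I_c ([d] is a default, only used outside I) *)
Definition iet_letter (d : L) T x :=
  nth d (iet_alph T) (find (fun a => in_sub T a x) (iet_alph T)).

Definition traj (d : L) T x : nat -> L :=
  fun i => iet_letter d T (iter i (iet_map T) x).

End IET.

Definition first_return (R : Type) (f : R -> R) (J : pred R) (x y : R) :=
  exists n : nat, [/\ (0 < n)%N, J (iter n f x),
     (forall m : nat, (0 < m < n)%N -> ~~ J (iter m f x)) & y = iter n f x].

(* extension of a (non-erasing) morphism f : L^* -> L^* to infinite words:
   the i-th letter of f(w_0) f(w_1) ...  is the i-th letter of
   f(w_0) ... f(w_i) (which has length > i when f is non-erasing). *)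
Definition morph_inf (L : eqType) (d : L) (f : L -> seq L) (w : nat -> L) : nat -> L :=
  fun i => nth d (flatten [seq f (w j) | j <- iota 0 i.+1]) i.

Definition rho_perm (R : realType) (L : eqType) (T : iet R L) (ak : L) : L -> L :=
  fun a => if a == iet_pinv T ak then iet_perm T ak else iet_perm T a.

Definition rho_morph (L : eqType) (pi : L -> L) (ak : L) : L -> seq L :=
  fun c => if c == pi ak then [:: pi ak; ak] else [:: c].

(* Main.v *)
Require Import Defs.
From HB Require Import structures.
From mathcomp Require Import all_boot all_order all_algebra.
From mathcomp Require Import reals.
From mathcomp Require Import lra zify.
From Stdlib Require Import FunctionalExtensionality.
Import Order.TTheory GRing.Theory Num.Theory.
Local Open Scope ring_scope.
Set Implicit Arguments. Unset Strict Implicit. Unset Printing Implicit Defensive.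

Lemma sum_ge0_seq (R : realType) (L : eqType) (s : seq L) (f : L -> R) :
  (forall b, b \in s -> 0 <= f b) -> 0 <= \sum_(b <- s) f b.
Proof. by move=> H; rewrite big_seq; apply: sumr_ge0 => i /H. Qed.

Lemma take_mono (R : realType) (L : eqType) (s : seq L) (f : L -> R) k k' :
  (forall b, b \in s -> 0 <= f b) -> (k <= k')%N ->
  \sum_(b <- take k s) f b <= \sum_(b <- take k' s) f b.
Proof.
move=> H hk; rewrite -(subnKC hk) takeD big_cat /= lerDl.
apply: sum_ge0_seq => b /mem_take /mem_drop; exact: H.
Qed.

Lemma take_S (R : realType) (L : eqType) (s : seq L) (f : L -> R) k x0 :
  (k < size s)%N ->
  \sum_(b <- take k.+1 s) f b = \sum_(b <- take k s) f b + f (nth x0 s k).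
Proof. by move=> hk; rewrite (take_nth x0 hk) big_rcons. Qed.

Lemma startE (R : realType) (L : eqType) (s : seq L) (F : L -> R) a :
  uniq s -> a \in s ->
  \sum_(b <- s | (index b s < index a s)%N) F b = \sum_(b <- take (index a s) s) F b.
Proof.
move=> us aS; set k := index a s.
have hk : (k <= size s)%N by apply: ltnW; rewrite index_mem.
have us' := us; rewrite -(cat_take_drop k s) cat_uniq in us'.
case/and3P: us' => _ hdis _.
rewrite -{1}(cat_take_drop k s) big_cat /=.
rewrite [X in _ + X]big_seq_cond [X in _ + X]big1 ?addr0; last first.
  move=> b /andP [bd hb]; exfalso; move: hb.
  rewrite -{1}(cat_take_drop k s) index_cat.
  have -> : (b \in take k s) = false.
    apply/negP => bt; move/hasP: hdis; apply; by exists b.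
  by rewrite size_takel // ltnNge leq_addr.
rewrite big_seq_cond [RHS]big_seq_cond; apply: eq_bigl => b.
case bt: (b \in take k s) => //=.
rewrite -{1}(cat_take_drop k s) index_cat bt.
have := index_mem b (take k s); rewrite bt => h.
by apply: leq_trans h _; rewrite size_takel.
Qed.

Lemma pinv_pi (L : eqType) (s : seq L) (f : L -> L) c :
  uniq s -> perm_eq (map f s) s -> c \in s ->
  nth (f c) s (index (f c) (map f s)) = c.
Proof.
move=> us pe cs.
have um : uniq (map f s) by rewrite (perm_uniq pe).
have hc : (index c s < size s)%N by rewrite index_mem.
have -> : f c = nth (f c) (map f s) (index c s) by rewrite (nth_map c) // nth_index.
by rewrite index_uniq ?size_map // nth_index.
Qed.

Lemma pi_pinv (L : eqType) (s : seq L) (f : L -> L) b :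
  perm_eq (map f s) s -> b \in s ->
  f (nth b s (index b (map f s))) = b.
Proof.
move=> pe bs; have bm : b \in map f s by rewrite (perm_mem pe).
have := index_mem b (map f s); rewrite bm size_map => hi.
by rewrite -(nth_map b b f hi) nth_index.
Qed.

Lemma pinv_mem (L : eqType) (s : seq L) (f : L -> L) b :
  perm_eq (map f s) s -> b \in s ->
  nth b s (index b (map f s)) \in s.
Proof.
move=> pe bs; have bm : b \in map f s by rewrite (perm_mem pe).
have := index_mem b (map f s); rewrite bm size_map => hi.
exact: mem_nth.
Qed.

Lemma cover (R : realType) (L : eqType) (s : seq L) (lam : L -> R) l y :
  uniq s -> l <= y -> y < l + \sum_(b <- s) lam b ->
  exists2 c, c \in s & (l + \sum_(b <- take (index c s) s) lam b <= y) &&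
        (y < l + \sum_(b <- take (index c s) s) lam b + lam c).
Proof.
elim: s l => [|c0 t IH] l /=; first by rewrite big_nil addr0 => _ h1 h2; lra.
move=> /andP [c0t ut] h1; rewrite big_cons => h2.
case: (ltrP y (l + lam c0)) => hy.
  by exists c0; rewrite ?mem_head //= eqxx /= big_nil addr0 h1 hy.
have [c ct /andP [h3 h4]] := IH (l + lam c0) ut hy ltac:(lra).
exists c; first by rewrite inE ct orbT.
have cc0 : (c0 == c) = false by apply/negP => /eqP e; rewrite e ct in c0t.
by rewrite /= cc0 /= big_cons; apply/andP; split; lra.
Qed.

Definition st0 (R : realType) (L : eqType) (T0 : iet R L) a :=
  iet_left T0 + \sum_(b <- take (index a (iet_alph T0)) (iet_alph T0)) iet_len T0 b.
Definition ist0 (R : realType) (L : eqType) (T0 : iet R L) p :=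
  iet_left T0 + \sum_(c <- take (index p (iet_alph T0)) (iet_alph T0))
     iet_len T0 (iet_perm T0 c).

Lemma GL1 (R : realType) (L : eqType) (T0 : iet R L) a y :
  is_iet T0 -> a \in iet_alph T0 ->
  in_sub T0 a y = (st0 T0 a <= y) && (y < st0 T0 a + iet_len T0 a).
Proof.
case=> us _ _ _ aS; by rewrite /in_sub /iet_start /iet_before startE.
Qed.

Lemma st0_lt (R : realType) (L : eqType) (T0 : iet R L) a b :
  is_iet T0 -> a \in iet_alph T0 -> b \in iet_alph T0 ->
  (index b (iet_alph T0) < index a (iet_alph T0))%N ->
  st0 T0 b + iet_len T0 b <= st0 T0 a.
Proof.
case=> us _ /allP pos _ aS bS hi; rewrite /st0 -addrA lerD2l.
have hb : (index b (iet_alph T0) < size (iet_alph T0))%N by rewrite index_mem.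
rewrite -{2}(nth_index b bS) -(take_S _ _ hb).
apply: take_mono => // c /pos; exact: ltW.
Qed.

Lemma GL_disj (R : realType) (L : eqType) (T0 : iet R L) a b y :
  is_iet T0 -> a \in iet_alph T0 -> b \in iet_alph T0 ->
  in_sub T0 a y -> in_sub T0 b y -> a = b.
Proof.
move=> hT aS bS; rewrite !GL1 // => /andP [h1 h2] /andP [h3 h4].
case: (ltngtP (index a (iet_alph T0)) (index b (iet_alph T0))) => hi.
- have h5 := st0_lt hT bS aS hi; clear hi aS bS hT; exfalso; lra.
- have h5 := st0_lt hT aS bS hi; clear hi aS bS hT; exfalso; lra.
- by rewrite -(nth_index a aS) hi nth_index.
Qed.

Lemma GL4 (R : realType) (L : eqType) (T0 : iet R L) p :
  is_iet T0 -> p \in iet_alph T0 -> iet_pinv T0 (iet_perm T0 p) = p.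
Proof. case=> us _ _ pe pS; exact: pinv_pi. Qed.

Lemma GL5 (R : realType) (L : eqType) (T0 : iet R L) b :
  is_iet T0 -> b \in iet_alph T0 -> iet_perm T0 (iet_pinv T0 b) = b.
Proof. case=> us _ _ pe pS; exact: pi_pinv. Qed.

Lemma GL6 (R : realType) (L : eqType) (T0 : iet R L) b :
  is_iet T0 -> b \in iet_alph T0 -> iet_pinv T0 b \in iet_alph T0.
Proof. case=> us _ _ pe pS; exact: pinv_mem. Qed.

Lemma GL2 (R : realType) (L : eqType) (T0 : iet R L) a y :
  is_iet T0 -> a \in iet_alph T0 -> in_sub T0 a y ->
  iet_map T0 y = y - st0 T0 a + ist0 T0 (iet_pinv T0 a).
Proof.
move=> hT aS ha; have hT' := hT; case: hT' => us _ _ pe.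
rewrite /iet_map big_mkcond (bigD1_seq a aS us) /= ha.
rewrite big_seq_cond big1 ?addr0; last first.
  move=> b /andP [bS ba]; case: ifP => // hb.
  by move: ba; rewrite (GL_disj hT bS aS hb ha) eqxx.
rewrite /iet_tau /iet_before startE //.
rewrite -(perm_big _ pe) big_map big_seq_cond.
rewrite (eq_bigl (fun c => (c \in iet_alph T0) &&
   (index c (iet_alph T0) < index (iet_pinv T0 a) (iet_alph T0))%N)); last first.
  by move=> c; case cS: (c \in iet_alph T0) => //=; rewrite GL4.
rewrite -big_seq_cond startE //; last exact: GL6.
rewrite /st0 /ist0; lra.
Qed.

Lemma GL3 (R : realType) (L : eqType) (T0 : iet R L) a y d :
  is_iet T0 -> a \in iet_alph T0 -> in_sub T0 a y -> iet_letter d T0 y = a.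
Proof.
move=> hT aS ha; rewrite /iet_letter.
have hs : has (fun b => in_sub T0 b y) (iet_alph T0) by apply/hasP; exists a.
have := nth_find d hs => /= h.
apply: (GL_disj hT _ aS h ha).
by apply: mem_nth; rewrite -has_find.
Qed.

Lemma GL7 (R : realType) (L : eqType) (T0 : iet R L) y :
  is_iet T0 -> iet_left T0 <= y -> y < iet_right T0 ->
  exists2 c, c \in iet_alph T0 & in_sub T0 c y.
Proof.
move=> hT h1 h2; have hT' := hT; case: hT' => us _ _ _.
have [c cS hc] := cover us h1 h2.
by exists c => //; rewrite GL1.
Qed.

Fixpoint gpos (L : eqType) (w : nat -> L) (e : L) (j : nat) : nat :=
  match j with 0 => 0%N | j'.+1 => (gpos w e j' + (if w j' == e then 2 else 1))%N end.

Lemma gpos_ge (L : eqType) (w : nat -> L) (e : L) j : (j <= gpos w e j)%N.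
Proof. elim: j => //= j IH; case: ifP => _; lia. Qed.

Lemma idx_rcons (L : eqType) (s : seq L) (x a : L) :
  a \in s -> index a (rcons s x) = index a s.
Proof. by move=> aS; rewrite -cats1 index_cat aS. Qed.

Lemma idx_rcons_last (L : eqType) (s : seq L) (x : L) :
  x \notin s -> index x (rcons s x) = size s.
Proof. by move=> xs; rewrite -cats1 index_cat (negbTE xs) /= eqxx addn0. Qed.

Lemma take_rcons' (L : eqType) (s : seq L) (x : L) k :
  (k <= size s)%N -> take k (rcons s x) = take k s.
Proof.
move=> hk; rewrite -cats1 take_cat; case: ltnP => h //.
have e : k = size s by apply/eqP; rewrite eqn_leq hk h.
by rewrite e subnn take0 cats0 take_size.
Qed.

Theorem proposition4p1 (R : realType) (L : eqType)
    (l : R) (s' : seq L) (ak : L) (lam : L -> R) (pi : L -> L) :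
  is_iet (IET l (rcons s' ak) lam pi) ->
  lam ak = lam (pi ak) ->
  ak != pi ak ->
  let T := IET l (rcons s' ak) lam pi in
  let T' := IET l s' lam (rho_perm T ak) in
  let inI' := fun x : R => (l <= x) && (x < iet_right T - lam ak) in
  [/\ is_iet T',
      iet_right T' = iet_right T - lam ak,
      (forall a : L, a \in s' -> forall x : R, in_sub T' a x = in_sub T a x),
      (forall x : R, inI' x -> first_return (iet_map T) inI' x (iet_map T' x))
    & (forall x : R, inI' x ->
         traj ak T x = morph_inf ak (rho_morph pi ak) (traj ak T' x))].
Proof.
move=> hT hlam hneq T T' inI'; rewrite -/T in hT.
have hT0 := hT; case: hT0 => /= uA _ /allP posA peA.
move: uA; rewrite rcons_uniq => /andP [aks' us'].
have akA : ak \in rcons s' ak by rewrite mem_rcons mem_head.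
have sA : forall b, b \in s' -> b \in rcons s' ak.
  by move=> b bs; rewrite mem_rcons inE bs orbT.
have piA : forall b, b \in rcons s' ak -> pi b \in rcons s' ak.
  by move=> b bA; rewrite -(perm_mem peA); apply: map_f.
have piakA := piA _ akA.
have piaks' : pi ak \in s'.
  by move: piakA; rewrite mem_rcons inE eq_sym (negbTE hneq).
have inj : {in rcons s' ak &, injective pi}.
  move=> x y xA yA e; by rewrite -(GL4 hT xA) -(GL4 hT yA) /= e.
set q0 := iet_pinv T ak.
have q0A : q0 \in rcons s' ak by apply: (GL6 hT).
have piq0 : pi q0 = ak by apply: (GL5 hT).
have q0ak : q0 != ak by apply/eqP => e; move: hneq; rewrite -{1}piq0 e eqxx.
have q0s : q0 \in s' by move: q0A; rewrite mem_rcons inE (negbTE q0ak).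
have pi'E : forall a, rho_perm T ak a = if a == q0 then pi ak else pi a by [].
have hT' : is_iet T'.
  split => /=.
  - exact: us'.
  - by apply/eqP => e; rewrite e in piaks'.
  - by apply/allP => b bs; apply: posA; apply: sA.
  apply: uniq_perm => //.
    rewrite map_inj_in_uniq // => x y xs ys; rewrite !pi'E.
    case: (eqVneq x q0) => [->|xq]; case: (eqVneq y q0) => [->|yq] //.
    + move=> e; have := inj _ _ akA (sA _ ys) e => e2.
      by move: ys; rewrite -e2 (negbTE aks').
    + move=> e; have := inj _ _ (sA _ xs) akA e => e2.
      by move: xs; rewrite e2 (negbTE aks').
    + by apply: inj; apply: sA.
  move=> x; apply/mapP/idP.
    case=> a aS ->; rewrite pi'E; case: (eqVneq a q0) => [_|aq] //.
    have := piA _ (sA _ aS); rewrite mem_rcons inE; case/orP => // /eqP e.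
    by move: aq; rewrite -(GL4 hT (sA _ aS)) /= e eqxx.
  move=> xs; case: (eqVneq x (pi ak)) => [->|xp].
    by exists q0; rewrite // pi'E eqxx.
  have pxA : iet_pinv T x \in rcons s' ak by apply: (GL6 hT); apply: sA.
  have ppx : pi (iet_pinv T x) = x by apply: (GL5 hT); apply: sA.
  exists (iet_pinv T x).
    move: pxA; rewrite mem_rcons inE; case/orP => // /eqP e.
    by move: xp; rewrite -ppx e eqxx.
  rewrite pi'E ifN ?ppx //; apply/eqP => e; move: xs; rewrite -ppx e piq0.
  by rewrite (negbTE aks').
have rT : iet_right T = l + \sum_(b <- s') lam b + lam ak.
  by rewrite /iet_right /= big_rcons /= addrA.
have rT' : iet_right T' = l + \sum_(b <- s') lam b by [].
have stE : forall a, a \in s' -> st0 T' a = st0 T a.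
  move=> a aS; rewrite /st0 /= idx_rcons // take_rcons' //.
  by apply: ltnW; rewrite index_mem.
have lampi' : forall c, lam (rho_perm T ak c) = lam (pi c).
  by move=> c; rewrite pi'E; case: eqP => // ->; rewrite piq0 hlam.
have istE : forall q, q \in s' -> ist0 T' q = ist0 T q.
  move=> q qS; rewrite /ist0 /= idx_rcons // take_rcons'; last first.
    by apply: ltnW; rewrite index_mem.
  by congr (_ + _); apply: eq_bigr => c _; rewrite lampi'.
have sumpi : \sum_(b <- s') lam (pi b) = \sum_(b <- s') lam b.
  have e : \sum_(b <- map pi (rcons s' ak)) lam b = \sum_(b <- rcons s' ak) lam b.
    exact: perm_big.
  move: e; rewrite big_map !big_rcons /= => e; lra.
have nn : forall b, b \in s' -> 0 <= lam (pi b).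
  by move=> b bS; apply: ltW; apply: posA; apply: piA; apply: sA.
have bound : forall q, q \in s' -> ist0 T q + lam (pi q) <= l + \sum_(b <- s') lam b.
  move=> q qS; rewrite /ist0 /= idx_rcons // take_rcons'; last first.
    by apply: ltnW; rewrite index_mem.
  have hk : (index q s' < size s')%N by rewrite index_mem.
  have := take_S (fun c => lam (pi c)) q hk; rewrite nth_index // => e.
  have := take_mono nn hk; rewrite take_size sumpi e => h; lra.
have istak : ist0 T ak = l + \sum_(b <- s') lam b.
  by rewrite /ist0 /= idx_rcons_last // take_rcons' // take_size sumpi.
have stak : st0 T ak = l + \sum_(b <- s') lam b.
  by rewrite /st0 /= idx_rcons_last // take_rcons' // take_size.
have ge0 : forall q, l <= ist0 T q.
  move=> q; rewrite /ist0 /= lerDl; apply: sum_ge0_seq => b /mem_take bA.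
  by apply: ltW; apply: posA; apply: piA.
have step : forall y, inI' y ->
   [/\ iet_letter ak T y = iet_letter ak T' y, inI' (iet_map T' y),
     iet_letter ak T' y != pi ak -> iet_map T y = iet_map T' y &
     iet_letter ak T' y = pi ak ->
       [/\ iet_letter ak T (iet_map T y) = ak, ~~ inI' (iet_map T y) &
           iet_map T (iet_map T y) = iet_map T' y]].
  move=> y; rewrite /inI' rT => /andP [y1 y2].
  have [c cS hc'] : exists2 c, c \in s' & in_sub T' c y.
    by apply: (GL7 hT') => //; rewrite rT'; lra.
  have cA := sA _ cS.
  have hc : in_sub T c y by rewrite (GL1 _ hT cA) -stE // -(GL1 _ hT' cS).
  have := hc; rewrite (GL1 _ hT cA) => /andP [c1 c2]; change (iet_len T c) with (lam c) in c2.
  rewrite (GL3 _ hT' cS hc') (GL3 _ hT cA hc).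
  have Ty := GL2 hT cA hc; have T'y := GL2 hT' cS hc'.
  rewrite stE // in T'y.
  set q := iet_pinv T c in Ty.
  have qA : q \in rcons s' ak by apply: (GL6 hT).
  have pq : pi q = c by apply: (GL5 hT).
  case: (eqVneq c (pi ak)) => [ec|nc].
  - have qak : q = ak by rewrite /q ec (GL4 hT akA).
    rewrite qak istak -stak in Ty.
    have p'q0 : rho_perm T ak q0 = pi ak by rewrite pi'E eqxx.
    have ip : iet_pinv T' c = q0 by rewrite ec -p'q0 (GL4 hT' q0s).
    rewrite ip istE // in T'y.
    have hl : lam c = lam ak by rewrite ec hlam.
    have hTy : in_sub T ak (iet_map T y).
      rewrite (GL1 _ hT akA) Ty; change (iet_len T ak) with (lam ak); apply/andP; split; lra.
    have TTy := GL2 hT akA hTy.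
    rewrite -/q0 in TTy.
    have bq := bound _ q0s; rewrite piq0 in bq.
    split => //.
    + apply/andP; split; rewrite T'y.
      * have := ge0 q0; lra.
      * rewrite ?rT; lra.
    + split => //.
      * exact: (GL3 _ hT akA hTy).
      * rewrite /inI' ?rT Ty negb_and; apply/orP; right; rewrite -leNgt.
        lra.
      * rewrite TTy T'y Ty; lra.
  - have qak : q != ak by apply/eqP => e; move: nc; rewrite -pq e eqxx.
    have qS : q \in s' by move: qA; rewrite mem_rcons inE (negbTE qak).
    have qq0 : q != q0.
      by apply/eqP => e; move: cS; rewrite -pq e piq0 (negbTE aks').
    have p'q : rho_perm T ak q = c by rewrite pi'E (negbTE qq0).
    have ip : iet_pinv T' c = q by rewrite -p'q (GL4 hT' qS).
    rewrite ip istE // in T'y.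
    have bq := bound _ qS; rewrite pq in bq.
    split => //.
    + apply/andP; split; rewrite T'y.
      * have := ge0 q; lra.
      * rewrite ?rT; lra.
    + by rewrite Ty T'y.
    + by move=> e; move: nc; rewrite e eqxx.
split.
- exact: hT'.
- by rewrite rT' rT addrK.
- move=> a aS x; rewrite (GL1 x hT' aS) (GL1 x hT (sA _ aS)) stE //.
- move=> x hx; have [e1 e2 e3 e4] := step x hx.
  case: (eqVneq (iet_letter ak T' x) (pi ak)) => [ec|nc].
  + have [f1 f2 f3] := e4 ec.
    exists 2%N; split.
    * by [].
    * change (inI' (iet_map T (iet_map T x))); by rewrite f3.
    * by case=> [|[|m]] //= _; exact: f2.
    * change (iet_map T' x = iet_map T (iet_map T x)); by rewrite f3.
  + exists 1%N; split.
    * by [].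
    * change (inI' (iet_map T x)); by rewrite e3.
    * by case=> [|m].
    * change (iet_map T' x = iet_map T x); by rewrite e3.
- move=> x hx.
  have claim : forall j, [/\ inI' (iter j (iet_map T') x),
      iter (gpos (traj ak T' x) (pi ak) j) (iet_map T) x = iter j (iet_map T') x &
      flatten [seq rho_morph pi ak (traj ak T' x i) | i <- iota 0 j] =
      [seq traj ak T x m | m <- iota 0 (gpos (traj ak T' x) (pi ak) j)]].
    elim => [|j [IH1 IH2 IH3]]; first by split.
    set y := iter j (iet_map T') x in IH1 IH2.
    have [e1 e2 e3 e4] := step y IH1.
    have wj : traj ak T' x j = iet_letter ak T' y by [].
    set g := gpos (traj ak T' x) (pi ak) j in IH2 IH3.
    have hg : traj ak T x g = iet_letter ak T' y by rewrite /traj IH2 e1.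
    have -> : gpos (traj ak T' x) (pi ak) j.+1 =
       (g + (if traj ak T' x j == pi ak then 2 else 1))%N by [].
    rewrite -addn1 iotaD map_cat flatten_cat IH3 iotaD map_cat -[(0 + g)%N]/g /= cats0.
    rewrite /rho_morph wj.
    case: (eqVneq (iet_letter ak T' y) (pi ak)) => [ec|nc].
    + have [f1 f2 f3] := e4 ec.
      have hg1 : traj ak T x g.+1 = ak by rewrite /traj iterS IH2 f1.
      rewrite addn1; split.
      * exact: e2.
      * by rewrite addn2 !iterS IH2 f3.
      * by rewrite /= hg hg1 ec.
    + rewrite addn1; split.
      * exact: e2.
      * by rewrite addn1 iterS IH2 e3.
      * by rewrite /= hg.
  apply: functional_extensionality => i.
  rewrite /morph_inf; have [_ _ ->] := claim i.+1.
  have hi := gpos_ge (traj ak T' x) (pi ak) i.+1.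
  by rewrite (nth_map 0%N) ?size_iota // nth_iota.
Qed.
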